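(* Let $(p_D)_{D\in\mathcal{I}}$ be a probability distribution on $\mathcal{I}$, let $q>1$, and for $\mathbf{Q}\in B(\mathcal{L})$ define $$p^T(\mathbf{Q})=\sum_{S\in\mathcal{P}_{\mathbf{Q}}}\frac{p_S}{q-1}\left(1-p_S^{\,q-1}\right),\qquad p_S=\sum_{D\in S}p_D.$$ Then $p^T$ is an arbitrage-free instance-independent pricing function.
   Context: $\mathcal{I}$ is a countable nonempty set of database instances; queries are deterministic functions on $\mathcal{I}$; a query bundle is a finite tuple of queries from a language $\mathcal{L}$, evaluated componentwise; $B(\mathcal{L})$ is the set of bundles, closed under concatenation $\mathbf{Q}_1,\mathbf{Q}_2$. $\mathcal{P}_{\mathbf{Q}}$ is the partition of $\mathcal{I}$ into the equivalence classes of $D\sim D'\iff\mathbf{Q}(D)=\mathbf{Q}(D')$. An instance-independent pricing function $p$ is arbitrage-free if (i) whenever for all $D',D''\in\mathcal{I}$, $\mathbf{Q}_2(D')=\mathbf{Q}_2(D'')$ implies $\mathbf{Q}_1(D')=\mathbf{Q}_1(D'')$, we have $p(\mathbf{Q}_2)\ge p(\mathbf{Q}_1)$; and (ii) $p(\mathbf{Q}_1,\mathbf{Q}_2)\le p(\mathbf{Q}_1)+p(\mathbf{Q}_2)$ for all bundles. *)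

(* Defs.v *)
From HB Require Import structures.
From mathcomp Require Import all_boot all_order all_algebra.
From mathcomp Require Import all_classical all_reals all_analysis.
From Stdlib Require List.
Set Implicit Arguments. Unset Strict Implicit. Unset Printing Implicit Defensive.
Import Order.TTheory GRing.Theory Num.Theory.
Local Open Scope classical_set_scope.
Local Open Scope ring_scope.

(* Instances are elements of a type I; a dbquery is a deterministic function
   I -> O (O = type of dbquery answers); a language is a set of queries; a
   qbundle is a finite list of queries of the language, evaluated componentwise. *)

Definition dbquery (I : choiceType) (O : Type) := I -> O.
Definition qbundle (I : choiceType) (O : Type) := seq (dbquery I O).

Definition in_bundles (I : choiceType) (O : Type) (L : set (dbquery I O)) (Q : qbundle I O) : Prop :=
  List.Forall L Q.

Definition beval (I : choiceType) (O : Type) (Q : qbundle I O) (D : I) : seq O :=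
  map (fun f => f D) Q.

Definition bclass (I : choiceType) (O : Type) (Q : qbundle I O) (D : I) : set I :=
  [set D' | beval Q D' = beval Q D].

Definition bpartition (I : choiceType) (O : Type) (Q : qbundle I O) : set (set I) :=
  [set S | exists D, S = bclass Q D].

Definition prob_distr (R : realType) (I : choiceType) (p : I -> R) : Prop :=
  (forall D, 0 <= p D) /\ (\esum_(D in [set: I]) (p D)%:E = 1)%E.

(* p_S = sum_{D in S} p_D  (a real number in [0,1] for a distribution) *)
Definition pmass (R : realType) (I : choiceType) (p : I -> R) (S : set I) : R :=
  fine (\esum_(D in S) (p D)%:E).

Definition pT_ext (R : realType) (I : choiceType) (O : Type) (p : I -> R) (q : R)
  (Q : qbundle I O) : \bar R :=
  \esum_(S in bpartition Q)
     ((pmass p S / (q - 1)) * (1 - (pmass p S) `^ (q - 1)))%:E.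

(* p^T(Q) as a real number (the sum is shown finite in the theorem) *)
Definition pT (R : realType) (I : choiceType) (O : Type) (p : I -> R) (q : R)
  (Q : qbundle I O) : R := fine (pT_ext p q Q).

Definition arbitrage_free (R : realType) (I : choiceType) (O : Type) (L : set (dbquery I O))
  (pr : qbundle I O -> R) : Prop :=
  (forall Q1 Q2 : qbundle I O, in_bundles L Q1 -> in_bundles L Q2 ->
     (forall D' D'' : I, beval Q2 D' = beval Q2 D'' -> beval Q1 D' = beval Q1 D'') ->
     pr Q1 <= pr Q2)
  /\
  (forall Q1 Q2 : qbundle I O, in_bundles L Q1 -> in_bundles L Q2 ->
     pr (Q1 ++ Q2) <= pr Q1 + pr Q2).

(* Main.v *)
Require Import Defs.
From HB Require Import structures.
From mathcomp Require Import all_boot all_order all_algebra.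
From mathcomp Require Import all_classical all_reals all_analysis.
From mathcomp Require Import lra ring.
Import Order.TTheory GRing.Theory Num.Theory.
Set Implicit Arguments. Unset Strict Implicit.
Local Open Scope classical_set_scope.
Local Open Scope ring_scope.
Section EsumAux.
Variables (R : realType) (T : choiceType).
Local Open Scope ereal_scope.

Lemma esumZl (S : set T) (a : T -> \bar R) (k : R) : (0 <= k)%R ->
  (forall x, 0 <= a x) ->
  \esum_(x in S) (k%:E * a x) = k%:E * \esum_(x in S) a x.
Proof.
move=> k0 a0; rewrite /esum -ereal_supZl//; last first.
  by apply/set0P; exists (\sum_(x \in set0) a x); exists set0 => //; exact: fsets_set0.
congr ereal_sup; apply/seteqP; split => x /=.
  move=> [A AS <-]; exists (\sum_(i \in A) a i); first by exists A.
  by rewrite ge0_mule_fsumr.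
move=> [y [A AS <-] <-]; exists A => //; by rewrite ge0_mule_fsumr.
Qed.

Lemma esum_swap (f : T -> T -> \bar R) : (forall x y, 0 <= f x y) ->
  \esum_(x in [set: T]) \esum_(y in [set: T]) f x y =
  \esum_(y in [set: T]) \esum_(x in [set: T]) f x y.
Proof.
move=> f0; rewrite !esum_esum//.
rewrite (reindex_esum ([set: T] `*`` fun=> [set: T]) ([set: T] `*`` fun=> [set: T])
   (fun k => (k.2, k.1)))//.
split.
- by move=> [x y].
- by move=> [a b] [c d] _ _ /= [-> ->].
- by move=> [a b] _; exists (b, a).
Qed.

Lemma esum_partition (P : set (set T)) (f : T -> \bar R) :
  (forall x, 0 <= f x) ->
  (forall x, exists2 S, P S & S x) ->
  (forall S1 S2 x, P S1 -> P S2 -> S1 x -> S2 x -> S1 = S2) ->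
  \esum_(S in P) \esum_(x in S) f x = \esum_(x in [set: T]) f x.
Proof.
move=> f0 cov uniq; rewrite esum_esum//.
rewrite (reindex_esum (P `*`` (fun S => S)) [set: T] snd)//.
split.
- by move=> [S x].
- move=> [S1 x1] [S2 x2]; rewrite !inE => -[/= P1 S1x] [/= P2 S2x] /= e.
  by subst x2; rewrite (uniq S1 S2 x1).
- by move=> x _; have [S PS Sx] := cov x; exists (S, x).
Qed.

End EsumAux.

Section Basic.
Variables (R : realType) (I : countType) (O : Type) (p : I -> R).
Hypothesis hp0 : forall D, 0 <= p D.
Hypothesis hp1 : (\esum_(D in [set: I]) (p D)%:E = 1)%E.
Local Open Scope ereal_scope.

Lemma esum_p_sub (S1 S2 : set I) : S1 `<=` S2 ->
  \esum_(D in S1) (p D)%:E <= \esum_(D in S2) (p D)%:E.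
Proof.
move=> S12; rewrite esum_mkcond [X in _ <= X]esum_mkcond; apply: le_esum => D _.
case: ifPn => [/[!inE] /S12 S2D|_]; first by rewrite ifT ?inE.
by case: ifPn => // _; rewrite lee_fin.
Qed.

Lemma esum_p_le1 (S : set I) : \esum_(D in S) (p D)%:E <= 1.
Proof. by rewrite -hp1; apply: esum_p_sub. Qed.

Lemma esum_p_ge0 (S : set I) : 0 <= \esum_(D in S) (p D)%:E.
Proof. by apply: esum_ge0 => D _; rewrite lee_fin. Qed.

Lemma pmassE (S : set I) : \esum_(D in S) (p D)%:E = (pmass p S)%:E.
Proof.
rewrite /pmass fineK// ge0_fin_numE ?esum_p_ge0//.
by rewrite (le_lt_trans (esum_p_le1 S))// ltry.
Qed.

Lemma pmass_ge0 S : (0 <= pmass p S)%R.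
Proof. by rewrite -lee_fin -pmassE esum_p_ge0. Qed.

Lemma pmass_le1 S : (pmass p S <= 1)%R.
Proof. by rewrite -lee_fin -pmassE esum_p_le1. Qed.

Lemma pmass_sub S1 S2 : S1 `<=` S2 -> (pmass p S1 <= pmass p S2)%R.
Proof. by move=> S12; rewrite -lee_fin -!pmassE esum_p_sub. Qed.

Lemma pmass_mem (S : set I) D : S D -> (p D <= pmass p S)%R.
Proof.
move=> SD; rewrite -lee_fin -pmassE -(esum_set1 (t:=D) (a:=fun D => (p D)%:E)); last by rewrite lee_fin.
by apply: esum_p_sub => x ->.
Qed.

End Basic.

Section Classes.
Variables (I : countType) (O : Type).

Lemma bclass_sym (Q : qbundle I O) D D' : bclass Q D D' -> bclass Q D' D.
Proof. by rewrite /bclass /= => ->. Qed.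

Lemma bclass_eq (Q : qbundle I O) D D' : bclass Q D D' -> bclass Q D' = bclass Q D.
Proof. by rewrite /bclass /= => e; apply/seteqP; split => x /=; rewrite e. Qed.

Lemma bclass_cat (Q1 Q2 : qbundle I O) D :
  bclass (Q1 ++ Q2) D = bclass Q1 D `&` bclass Q2 D.
Proof.
rewrite /bclass /beval; apply/seteqP; split => x /=; rewrite !map_cat.
  move=> e; split.
    by have := congr1 (take (size Q1)) e; rewrite !take_size_cat ?size_map.
  by have := congr1 (drop (size Q1)) e; rewrite !drop_size_cat ?size_map.
by move=> [-> ->].
Qed.

End Classes.

Section UDef.
Variables (R : realType) (I : countType) (p : I -> R).
Hypothesis hp0 : forall D, (0 <= p D)%R.
Hypothesis hp1 : (\esum_(D in [set: I]) (p D)%:E = 1)%E.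
Local Open Scope ereal_scope.

Definition U (h : I -> R) := \esum_(D in [set: I]) (p D * h D)%:E.

Lemma U_ge0 h : (forall D, 0 <= h D)%R -> 0 <= U h.
Proof. by move=> h0; apply: esum_ge0 => D _; rewrite lee_fin mulr_ge0. Qed.

Lemma U_scale k h : (0 <= k)%R -> (forall D, 0 <= h D)%R ->
  U (fun D => k * h D)%R = k%:E * U h.
Proof.
move=> k0 h0; rewrite /U -esumZl//; last by move=> D; rewrite lee_fin mulr_ge0.
by apply: eq_esum => D _; rewrite -EFinM mulrCA.
Qed.

Lemma U_const k : (0 <= k)%R -> U (fun=> k) = k%:E.
Proof.
move=> k0; rewrite (_ : U _ = U (fun D => k * 1)%R); last first.
  by apply: eq_esum => D _; rewrite mulr1.
rewrite U_scale// /U.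
by rewrite (eq_esum (b := fun D => (p D)%:E)) ?hp1 ?mule1// => D _; rewrite mulr1.
Qed.

Lemma U_le h1 h2 : (forall D, 0 < p D -> h1 D <= h2 D)%R -> U h1 <= U h2.
Proof.
move=> h12; apply: le_esum => D _; rewrite lee_fin.
have := hp0 D; rewrite le_eqVlt => /predU1P[<-|pD]; first by rewrite !mul0r.
by rewrite ler_wpM2l ?h12// ltW.
Qed.

Lemma U_fin h K : (0 <= K)%R -> (forall D, 0 <= h D <= K)%R -> U h \is a fin_num.
Proof.
move=> K0 hK.
rewrite ge0_fin_numE; last by apply: U_ge0 => D; have /andP[] := hK D.
apply: (@le_lt_trans _ _ (U (fun=> K))); last by rewrite U_const// ltry.
by apply: U_le => D _; have /andP[] := hK D.
Qed.

Lemma U_add h1 h2 : (forall D, 0 <= h1 D)%R -> (forall D, 0 <= h2 D)%R ->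
  U (fun D => h1 D + h2 D)%R = U h1 + U h2.
Proof.
move=> h10 h20; rewrite /U -esumD; last 2 first.
- by move=> D _; rewrite lee_fin mulr_ge0.
- by move=> D _; rewrite lee_fin mulr_ge0.
by apply: eq_esum => D _; rewrite mulrDr EFinD.
Qed.

End UDef.

Section Main.
Variables (R : realType) (I : countType) (O : Type) (p : I -> R) (q : R).
Hypothesis hp0 : forall D, (0 <= p D)%R.
Hypothesis hp1 : (\esum_(D in [set: I]) (p D)%:E = 1)%E.
Hypothesis hq : (1 < q)%R.

Let r := (q - 1)%R.
Let hr : (0 < r)%R. Proof. by rewrite /r subr_gt0. Qed.

Definition g (x : R) := ((1 - x `^ r) / r)%R.

Lemma powr_le1 x : (0 <= x <= 1)%R -> (x `^ r <= 1)%R.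
Proof.
move=> /andP[x0 x1]; apply: (@le_trans _ _ (1 `^ r)); last by rewrite powR1.
by apply: ge0_ler_powR; rewrite ?nnegrE // ltW.
Qed.

Lemma g_ge0 x : (0 <= x <= 1)%R -> (0 <= g x)%R.
Proof.
by move=> hx; rewrite /g divr_ge0 ?subr_ge0 ?powr_le1// ltW.
Qed.

Lemma g_le x : (g x <= r^-1)%R.
Proof.
rewrite /g -[leRHS]mul1r ler_wpM2r ?invr_ge0 ?(ltW hr)//.
by rewrite lerBlDr lerDl powR_ge0.
Qed.

Definition mQ (Q : qbundle I O) D := pmass p (bclass Q D).

Lemma mQ_ge0 Q D : (0 <= mQ Q D)%R. Proof. exact: pmass_ge0. Qed.
Lemma mQ_le1 Q D : (mQ Q D <= 1)%R. Proof. exact: pmass_le1. Qed.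
Lemma mQ_01 Q D : (0 <= mQ Q D <= 1)%R. Proof. by rewrite mQ_ge0 mQ_le1. Qed.
Lemma mQ_p Q D : (p D <= mQ Q D)%R. Proof. exact: pmass_mem. Qed.

Definition V (Q : qbundle I O) := U p (fun D => g (mQ Q D)).

Lemma pT_extE Q : pT_ext p q Q = V Q.
Proof.
rewrite /V /U -(@esum_partition _ _ (bpartition Q)); last 3 first.
- by move=> D; rewrite lee_fin mulr_ge0// g_ge0// mQ_01.
- by move=> x; exists (bclass Q x) => //; exists x.
- move=> S1 S2 x [D1 ->] [D2 ->] h1 h2.
  by rewrite -(bclass_eq h1) -(bclass_eq h2).
rewrite /pT_ext; apply: eq_esum => S [D0 ->].
rewrite (eq_esum (b := fun D => ((g (pmass p (bclass Q D0)))%:E * (p D)%:E)%E)); last first.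
  by move=> D /bclass_eq hD; rewrite /mQ hD -EFinM mulrC.
rewrite esumZl; last 2 first.
- exact: g_ge0 (mQ_01 Q D0).
- by move=> D; rewrite lee_fin.
rewrite pmassE// -EFinM /g /r; congr (_%:E); ring.
Qed.

Lemma V_fin Q : V Q \is a fin_num.
Proof.
apply: (U_fin hp0 hp1 (K := r^-1)) => //; first by rewrite invr_ge0 ltW.
by move=> D; rewrite g_ge0 ?mQ_01// g_le.
Qed.

Lemma V_mono (Q1 Q2 : qbundle I O) :
  (forall D' D'', beval Q2 D' = beval Q2 D'' -> beval Q1 D' = beval Q1 D'') ->
  (V Q1 <= V Q2)%E.
Proof.
move=> h; apply: (U_le hp0) => D _.
have sub : bclass Q2 D `<=` bclass Q1 D by move=> x /h.
have := pmass_sub hp0 hp1 sub; rewrite -/(mQ Q2 D) -/(mQ Q1 D) => le21.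
rewrite /g ler_wpM2r ?invr_ge0 ?(ltW hr)// lerD2l lerN2.
by apply: ge0_ler_powR; rewrite ?nnegrE ?mQ_ge0// ltW.
Qed.

Local Open Scope ereal_scope.

Lemma expand (S : set I) (cl : I -> set I) (k : I -> R) :
  (forall D, 0 <= k D)%R ->
  \esum_(D in S) (p D * (pmass p (cl D) * k D))%:E =
  \esum_(D in [set: I]) \esum_(D'' in [set: I])
     (if (D \in S) && (D'' \in cl D) then (p D'' * (p D * k D))%:E else 0).
Proof.
move=> k0; rewrite esum_mkcond; apply: eq_esum => D _.
case: ifPn => DS /=; last by rewrite esum1.
rewrite -esum_mkcond.
rewrite (eq_esum (b := fun D'' => ((p D * k D)%:E * (p D'')%:E)%E)); last first.
  by move=> D'' _; rewrite -EFinM mulrC.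
rewrite esumZl; last 2 first.
- by rewrite mulr_ge0.
- by move=> D''; rewrite lee_fin.
by rewrite pmassE// -EFinM; congr (_%:E); ring.
Qed.

Lemma esum_if0 (A : set I) (f : I -> \bar R) :
  \esum_(D in [set: I]) (if D \in A then f D else 0) = \esum_(D in A) f D.
Proof. by rewrite [RHS]esum_mkcond. Qed.

Variables (Q1 Q2 : qbundle I O).
Let a D := mQ Q1 D.
Let b D := mQ Q2 D.
Let c D := mQ (Q1 ++ Q2) D.

Lemma c_le_a D : (c D <= a D)%R.
Proof. by apply: pmass_sub => //; rewrite bclass_cat => x []. Qed.
Lemma c_le_b D : (c D <= b D)%R.
Proof. by apply: pmass_sub => //; rewrite bclass_cat => x []. Qed.

Lemma cell_bound D' D'' :
  \esum_(D in bclass Q1 D' `&` bclass Q2 D'') (p D / c D)%:E <= 1.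
Proof.
set C := bclass Q1 D' `&` bclass Q2 D''.
rewrite (eq_esum (b := fun D => (((pmass p C)^-1)%:E * (p D)%:E)%E)); last first.
  move=> D [h1 h2]; rewrite -EFinM mulrC /c /mQ bclass_cat.
  by rewrite (bclass_eq h1) (bclass_eq h2).
rewrite esumZl; last 2 first.
- by rewrite invr_ge0 pmass_ge0.
- by move=> D; rewrite lee_fin.
rewrite pmassE// -EFinM lee_fin.
have [->|M0] := eqVneq (pmass p C) 0%R; first by rewrite invr0 mul0r.
by rewrite mulVf.
Qed.

Definition B := U p (fun D => (b D `^ r)%R).

Lemma B_fin : B \is a fin_num.
Proof.
apply: (U_fin hp0 hp1 (K := 1%R)) => // D /=.
by rewrite powR_ge0 powr_le1// mQ_01.
Qed.

Lemma B_ge0 : 0 <= B.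
Proof. by apply: (U_ge0 hp0) => D; exact: powR_ge0. Qed.

Lemma collapse D' D'' :
  \esum_(D in [set: I])
    (if (D \in bclass Q1 D') && (D'' \in bclass Q2 D)
     then (p D'' * (p D * (b D `^ r / c D)))%:E else 0)
  <= (p D'' * b D'' `^ r)%:E.
Proof.
rewrite (eq_esum (b := fun D => if D \in bclass Q1 D' `&` bclass Q2 D''
   then ((p D'' * b D'' `^ r)%:E * (p D / c D)%:E)%E else 0)); last first.
  move=> D _; rewrite in_setI; case: (D \in bclass Q1 D') => //=.
  case: (boolP (D'' \in bclass Q2 D)) => h.
    have h' : bclass Q2 D D'' by exact: set_mem.
    rewrite ifT; last by apply: mem_set; rewrite /bclass /= h'.
    rewrite -EFinM /b /mQ (bclass_eq h'); congr (_%:E); ring.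
  rewrite ifF //; apply/negP => /set_mem h'; move/negP: h; apply.
  by apply: mem_set; rewrite /bclass /= h'.
rewrite esum_if0 esumZl; last 2 first.
- by rewrite mulr_ge0// powR_ge0.
- by move=> D; rewrite lee_fin divr_ge0// mQ_ge0.
rewrite -[X in _ <= X]mule1 lee_pmul//; first by rewrite lee_fin mulr_ge0// powR_ge0.
  by apply: esum_ge0 => D _; rewrite lee_fin divr_ge0// mQ_ge0.
exact: cell_bound.
Qed.

Lemma K_eq D : (b D `^ q / c D = b D * (b D `^ r / c D))%R.
Proof.
rewrite mulrA /r mulr_powRB1 //; first exact: mQ_ge0.
exact: lt_trans ltr01 hq.
Qed.

Lemma if_ge0 (P : bool) (x : R) : (0 <= x)%R -> 0 <= (if P then x%:E else 0).
Proof. by case: P => //; rewrite lee_fin. Qed.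

Lemma inner_le D' :
  \esum_(D in bclass Q1 D') (p D * (b D `^ q / c D))%:E <= B.
Proof.
rewrite (eq_esum (b := fun D =>
   (p D * (pmass p (bclass Q2 D) * (b D `^ r / c D)))%:E)); last first.
  by move=> D _; rewrite K_eq.
rewrite (expand (bclass Q1 D') (bclass Q2)); last first.
  by move=> D; rewrite divr_ge0 ?powR_ge0 ?mQ_ge0.
rewrite esum_swap; last first.
  move=> x y; apply: if_ge0; apply: mulr_ge0 => //; apply: mulr_ge0 => //.
  by apply: divr_ge0; [exact: powR_ge0|exact: mQ_ge0].
apply: (@le_trans _ _ (\esum_(D'' in [set: I]) (p D'' * b D'' `^ r)%:E)).
  by apply: le_esum => D'' _; exact: collapse.
by [].
Qed.

Definition L := U p (fun D => a D * (b D `^ q / c D))%R.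

Lemma L_le : L <= B.
Proof.
rewrite /L /U /a (expand [set: I] (bclass Q1)); last first.
  by move=> D; rewrite divr_ge0 ?powR_ge0 ?mQ_ge0.
rewrite esum_swap; last first.
  move=> x y; apply: if_ge0; apply: mulr_ge0 => //; apply: mulr_ge0 => //.
  by apply: divr_ge0; [exact: powR_ge0|exact: mQ_ge0].
apply: (@le_trans _ _ (\esum_(D' in [set: I]) ((fine B)%:E * (p D')%:E))).
  apply: le_esum => D' _.
  rewrite (eq_esum (b := fun D => if D \in bclass Q1 D'
     then ((p D')%:E * (p D * (b D `^ q / c D))%:E)%E else 0)); last first.
    move=> D _; rewrite in_setT /=.
    case: (boolP (D' \in bclass Q1 D)) => h.
      have h' : bclass Q1 D D' by exact: set_mem.
      by rewrite ifT ?EFinM //; apply: mem_set; rewrite /bclass /= h'.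
    rewrite ifF //; apply/negP => /set_mem h'; move/negP: h; apply.
    by apply: mem_set; rewrite /bclass /= h'.
  rewrite esum_if0 esumZl //; last first.
    by move=> D; rewrite lee_fin mulr_ge0 ?divr_ge0 ?powR_ge0 ?mQ_ge0.
  rewrite fineK ?B_fin // muleC; apply: lee_pmul.
  - by apply: esum_ge0 => D _; rewrite lee_fin mulr_ge0 ?divr_ge0 ?powR_ge0 ?mQ_ge0.
  - by rewrite lee_fin.
  - exact: inner_le.
  - by [].
rewrite esumZl; last 2 first.
- exact: fine_ge0 B_ge0.
- by move=> D; rewrite lee_fin.
by rewrite hp1 mule1 fineK ?B_fin.
Qed.


Lemma young_step D : (0 < p D)%R ->
  (q * b D `^ r <= (c D / a D) `^ r + r * (a D * (b D `^ q / c D)))%R.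
Proof.
move=> pD.
have c0 : (0 < c D)%R := lt_le_trans pD (mQ_p _ _).
have a0 : (0 < a D)%R := lt_le_trans c0 (c_le_a D).
have q0 : (0 < q)%R := lt_trans ltr01 hq.
have r0 : r != 0%R by rewrite gt_eqF.
set x := (c D / a D)%R.
have x0 : (0 < x)%R by rewrite divr_gt0.
have y0 : (0 <= b D `^ r)%R by exact: powR_ge0.
have s0 : (0 < q / r)%R by rewrite divr_gt0.
have conj : (q^-1 + (q / r)^-1 = 1)%R.
  by rewrite invf_div /r; field; rewrite gt_eqF.

have Y := conjugate_powR (ltW x0) y0 q0 s0 conj.
rewrite -powRrM (_ : r * (q / r) = q)%R in Y; last by field.
rewrite -(mulr_powRB1 (ltW x0) q0) -/r in Y.
set Z := (b D `^ r)%R in Y *; set X := (x `^ r)%R in Y *; set Y' := (b D `^ q)%R in Y *.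
have e1 : (q * Z = q / x * (x * Z))%R by field; rewrite gt_eqF.
have e2 : (X + r * (a D * (Y' / c D)) = q / x * (x * X / q + Y' / (q / r)))%R.
  by rewrite /x; field; rewrite !gt_eqF.
rewrite e1 e2 ler_wpM2l//.
by rewrite divr_ge0// ltW.
Qed.


Lemma ca_01 D : (0 <= c D / a D <= 1)%R.
Proof.
have a0 := mQ_ge0 Q1 D; have c0 := mQ_ge0 (Q1 ++ Q2) D.
rewrite divr_ge0//=.
have [ae|ap] := eqVneq (a D) 0%R; first by rewrite ae invr0 mulr0.
have ap' : (0 < a D)%R by rewrite lt0r ap.
by rewrite ler_pdivrMr// mul1r c_le_a.
Qed.

Definition Xs := U p (fun D => (c D / a D) `^ r)%R.

Lemma Xs_fin : Xs \is a fin_num.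
Proof.
apply: (U_fin hp0 hp1 (K := 1%R)) => // D /=.
by rewrite powR_ge0 powr_le1// ca_01.
Qed.

Lemma L_ge0 : 0 <= L.
Proof.
apply: (U_ge0 hp0) => D; apply: mulr_ge0; first exact: mQ_ge0.
by apply: divr_ge0; [exact: powR_ge0|exact: mQ_ge0].
Qed.

Lemma L_fin : L \is a fin_num.
Proof.
rewrite ge0_fin_numE ?L_ge0//; apply: le_lt_trans L_le _.
by rewrite ltey_eq B_fin.
Qed.

Lemma J : B <= Xs.
Proof.
have H1 : U p (fun D => q * b D `^ r)%R <=
   U p (fun D => (c D / a D) `^ r + r * (a D * (b D `^ q / c D)))%R.
  by apply: (U_le hp0) => D; exact: young_step.
have q0 : (0 <= q)%R by rewrite ltW// (lt_trans ltr01 hq).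
rewrite (U_scale hp0) // in H1; last by move=> D; exact: powR_ge0.
rewrite (U_add hp0) in H1; last 2 first.
- by move=> D; exact: powR_ge0.
- move=> D; apply: mulr_ge0; first exact: ltW.
  apply: mulr_ge0; first exact: mQ_ge0.
  by apply: divr_ge0; [exact: powR_ge0|exact: mQ_ge0].
rewrite (U_scale hp0) in H1; last 2 first.
- exact: ltW.
- move=> D; apply: mulr_ge0; first exact: mQ_ge0.
  by apply: divr_ge0; [exact: powR_ge0|exact: mQ_ge0].
rewrite -/B -/Xs -/L in H1.
have H2 : L <= B := L_le.
move: H1 H2; rewrite -(fineK B_fin) -(fineK Xs_fin) -(fineK L_fin).
rewrite -!EFinM -EFinD !lee_fin => H1 H2.
have : r = (q - 1)%R by [].
move: (fine B) (fine Xs) (fine L) H1 H2 => b' x' l' H1 H2 er.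
have r0 := hr.
nra.
Qed.


Lemma pointwise D : (0 < p D)%R ->
  (g (c D) + r^-1 * (c D / a D) `^ r <= g (a D) + r^-1)%R.
Proof.
move=> pD.
have c0 : (0 < c D)%R := lt_le_trans pD (mQ_p _ _).
have a0 : (0 < a D)%R := lt_le_trans c0 (c_le_a D).
have e : c D = (a D * (c D / a D))%R by field; rewrite gt_eqF.
rewrite /g {1}e powRM; last 2 first.
- exact: ltW.
- by have /andP[] := ca_01 D.
have /andP[A0 A1] : (0 <= a D `^ r <= 1)%R by rewrite powR_ge0 powr_le1 ?mQ_01.
have /andP[t0 t1] : (0 <= (c D / a D) `^ r <= 1)%R by rewrite powR_ge0 powr_le1 ?ca_01.
move: (a D `^ r)%R ((c D / a D) `^ r)%R A0 A1 t0 t1 => A t A0 A1 t0 t1.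
have i0 : (0 < r^-1)%R by rewrite invr_gt0.
have h1 : (0 <= 1 - A)%R by rewrite subr_ge0.
have h2 : (0 <= 1 - t)%R by rewrite subr_ge0.
have := mulr_ge0 (mulr_ge0 (ltW i0) h1) h2.
move: (r^-1)%R i0 => ir i0 H.
nra.
Qed.

Lemma V_sub : V (Q1 ++ Q2) <= V Q1 + V Q2.
Proof.
have ir0 : (0 <= r^-1)%R by rewrite invr_ge0 ltW.
have W_fin : U p (fun D => r^-1 * b D `^ r)%R \is a fin_num.
  apply: (U_fin hp0 hp1 (K := (r^-1)%R)) => // D /=.
  rewrite mulr_ge0 ?powR_ge0//= -[leRHS]mulr1 ler_wpM2l// powr_le1//.
  exact: mQ_01.
rewrite -(leeD2rE _ _ W_fin).
apply: (@le_trans _ _ (V (Q1 ++ Q2) + U p (fun D => r^-1 * (c D / a D) `^ r)%R)).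
  apply: leeD => //.
  rewrite !(U_scale hp0) //; try by move=> D; exact: powR_ge0.
  by apply: lee_pmul => //; [exact: B_ge0|exact: J].
rewrite /V -[X in X <= _](U_add hp0); last 2 first.
- by move=> D; apply: g_ge0; exact: mQ_01.
- by move=> D; rewrite mulr_ge0// powR_ge0.
apply: (@le_trans _ _ (U p (fun D => g (a D) + r^-1)%R)).
  by apply: (U_le hp0) => D pD; exact: pointwise.
rewrite [X in X <= _](U_add hp0 (h1 := fun D => g (a D)) (h2 := fun=> r^-1)%R); last 2 first.
- by move=> D; apply: g_ge0; exact: mQ_01.
- by [].
rewrite -addeA; apply: leeD => //.
rewrite -[X in _ <= X](U_add hp0); last 2 first.
- by move=> D; apply: g_ge0; exact: mQ_01.
- by move=> D; rewrite mulr_ge0// powR_ge0.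
apply: (U_le hp0) => D _ /=; rewrite /g le_eqVlt; apply/orP; left; apply/eqP.
by field; rewrite gt_eqF.
Qed.

End Main.

Unset Implicit Arguments.

Theorem lemma18 (R : realType) (I : countType) (O : Type)
  (L : set (dbquery I O)) (p : I -> R) (q : R) :
  inhabited I -> prob_distr p -> 1 < q ->
  (forall Q : qbundle I O, in_bundles L Q -> pT_ext p q Q \is a fin_num) /\
  arbitrage_free L (pT (O := O) p q).
Proof.
move=> _ [hp0 hp1] hq; split.
  by move=> Q _; rewrite (pT_extE hp0 hp1 hq); exact: V_fin.
split.
  move=> Q1 Q2 _ _ h; rewrite /pT !(pT_extE hp0 hp1 hq).
  by apply: fine_le; [exact: V_fin|exact: V_fin|exact: V_mono].
move=> Q1 Q2 _ _; rewrite /pT !(pT_extE hp0 hp1 hq) -fineD; try exact: V_fin.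
apply: fine_le; [exact: V_fin| |exact: V_sub].
by rewrite fin_numD; apply/andP; split; exact: V_fin.
Qed.
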